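(* Let $\mathcal G$ be the group of unitaries on $n$ qubits generated by $\{P_i, Z_{\{i,j\}}, X_{[ij]}\mid 0\le i,j\le n-1,\ i\ne j\}$, let $\mathcal N$ be its subgroup generated by $\{P_i,Z_{\{i,j\}}\}$ and $\mathcal X$ its subgroup generated by $\{X_{[ij]}\}$. Then every element of $\mathcal G$ admits a unique decomposition of the form $$Z_{\mathbf v}\,P_{\mathbf b}\,Z_{\mathbf B}\,X_{\mathbf A},$$ with $\mathbf v,\mathbf b\in\mathbb F_2^n$, $\mathbf B\in\mathcal B_n$, $\mathbf A\in GL_n(\mathbb F_2)$. Moreover $\mathcal G=\mathcal N\rtimes\mathcal X$ is the semidirect product of its normal subgroup $\mathcal N$ with $\mathcal X$, and the order of $\mathcal G$ is $2^{n(n+1)}\prod_{i=1}^n(2^i-1)$.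
   Context: Qubits are labelled $0,\dots,n-1$; the computational basis of $(\mathbb C^2)^{\otimes n}$ is $\{|x\rangle : x\in\mathbb F_2^n\}$, $\mathrm{i}=\sqrt{-1}$. $P_i$ is the phase gate $\mathrm{diag}(1,\mathrm{i})$ on qubit $i$; for $\mathbf b\in\mathbb F_2^n$, $P_{\mathbf b}=\prod_iP_i^{b_i}$, so $P_{\mathbf b}|x\rangle=\mathrm{i}^{\sum_ib_ix_i}|x\rangle$ (integer sum). $Z_{\mathbf v}|x\rangle=(-1)^{\sum_iv_ix_i}|x\rangle$. For $\mathbf A\in GL_n(\mathbb F_2)$, $X_{\mathbf A}|x\rangle=|\mathbf Ax\rangle$; for $i\ne j$, $[ij]=\mathbf I+\mathbf E_{ij}$ ($\mathbf E_{ij}$ having a single 1 at entry $(i,j)$) and $X_{[ij]}$ is the CNOT gate with target $i$ and control $j$. $\mathcal B_n$ is the set of symmetric $n\times n$ matrices over $\mathbb F_2$ with zero diagonal; for $\mathbf B\in\mathcal B_n$, $Z_{\mathbf B}|x\rangle=(-1)^{\sum_{i<j}b_{ij}x_ix_j}|x\rangle$, and $Z_{\{i,j\}}$ is the CZ gate, i.e. $Z_{\mathbf B}$ for the matrix $\mathbf B$ whose only ones are at entries $(i,j)$ and $(j,i)$. *)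

(* Defs.v *)
From HB Require Import structures.
From mathcomp Require Import all_boot all_order all_algebra all_field.
Set Implicit Arguments. Unset Strict Implicit. Unset Printing Implicit Defensive.
Import Order.TTheory GRing.Theory Num.Theory.
Local Open Scope ring_scope.

(* Computational basis labels: x in F_2^n, as column vectors. *)
Definition bits (n : nat) := 'cV['F_2]_n.

(* Index set of the computational basis; operators on (C^2)^{\otimes n}
   are matrices indexed by 'I_#|bits n|, basis index k <-> enum_val k. *)
Definition dim (n : nat) := #|{: bits n}|.
Definition op_t (n : nat) := 'M[algC]_(dim n).

Definition bit (n : nat) (x : bits n) (i : 'I_n) : nat := val (x i ord0).

(* The monomial operator |x> |-> c x |f x>. *)
Definition monop (n : nat) (f : bits n -> bits n) (c : bits n -> algC) : op_t n :=
  \matrix_(k, l) (if enum_val k == f (enum_val l) then c (enum_val l) else 0).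

(* P_b |x> = i^{sum_i b_i x_i} |x>  (integer sum) *)
Definition Pgate (n : nat) (b : bits n) : op_t n :=
  monop id (fun x => 'i ^+ (\sum_(i < n) bit b i * bit x i)%N).

Definition Zgate (n : nat) (v : bits n) : op_t n :=
  monop id (fun x => (-1) ^+ (\sum_(i < n) bit v i * bit x i)%N).

Definition Bset (n : nat) (B : 'M['F_2]_n) : Prop :=
  B^T = B /\ forall i, B i i = 0.

Definition ZBgate (n : nat) (B : 'M['F_2]_n) : op_t n :=
  monop id (fun x => (-1) ^+ (\sum_(i < n) \sum_(j < n | (i < j)%N)
                                 val (B i j) * bit x i * bit x j)%N).

Definition Xgate (n : nat) (A : 'M['F_2]_n) : op_t n :=
  monop (fun x => A *m x) (fun _ => 1).

Definition Pi (n : nat) (i : 'I_n) : op_t n := Pgate (delta_mx i ord0).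
Definition CZ (n : nat) (i j : 'I_n) : op_t n := ZBgate (delta_mx i j + delta_mx j i).
Definition CNOT (n : nat) (i j : 'I_n) : op_t n := Xgate (1%:M + delta_mx i j).

Inductive gen (n : nat) (S : op_t n -> Prop) : op_t n -> Prop :=
| gen_one : gen S 1%:M
| gen_base U : S U -> gen S U
| gen_mul U V : gen S U -> gen S V -> gen S (U *m V)
| gen_inv U : gen S U -> gen S (invmx U).

Definition Gens (n : nat) (U : op_t n) : Prop :=
  (exists i, U = Pi i) \/ (exists i j, i != j /\ U = CZ i j) \/
  (exists i j, i != j /\ U = CNOT i j).
Definition NGens (n : nat) (U : op_t n) : Prop :=
  (exists i, U = Pi i) \/ (exists i j, i != j /\ U = CZ i j).
Definition XGens (n : nat) (U : op_t n) : Prop :=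
  exists i j, i != j /\ U = CNOT i j.

Definition Ggrp (n : nat) := gen (@Gens n).
Definition Ngrp (n : nat) := gen (@NGens n).
Definition Xgrp (n : nat) := gen (@XGens n).

Definition semidirect (n : nat) (G N X : op_t n -> Prop) : Prop :=
  [/\ (forall U, N U -> G U), (forall U, X U -> G U),
      (forall g U, G g -> N U -> N (invmx g *m U *m g)),
      (forall U, N U -> X U -> U = 1%:M)
    & (forall g, G g -> exists U V, [/\ N U, X V & g = U *m V])].

(* Main.v *)
Require Import Defs.
From HB Require Import structures.
From mathcomp Require Import all_boot all_order all_algebra all_field.
From mathcomp Require Import ring zify.
Import Order.TTheory GRing.Theory Num.Theory.
Local Open Scope ring_scope.
Set Implicit Arguments. Unset Strict Implicit. Unset Printing Implicit Defensive.

Lemma F2P (a : 'F_2) : a = 0 \/ a = 1.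
Proof. by case: a => [[|[|k]] Hk] //; [left|right]; apply/eqP. Qed.

Section Monop.
Variable n : nat.
Implicit Types (f g : bits n -> bits n) (c d : bits n -> algC).

Lemma eq_monop f f' c c' : f =1 f' -> c =1 c' -> monop f c = monop f' c'.
Proof. by move=> ef ec; apply/matrixP => k l; rewrite !mxE ef ec. Qed.

Lemma monop_mul f g c d :
  monop f c *m monop g d = monop (f \o g) (fun x => c (g x) * d x).
Proof.
apply/matrixP => k l; rewrite !mxE.
rewrite (bigD1 (enum_rank (g (enum_val l)))) //= big1 ?addr0.
  by rewrite !mxE enum_rankK eqxx; case: ifP; rewrite ?mul0r.
move=> m /negbTE Hm; rewrite !mxE.
have -> : (enum_val m == g (enum_val l)) = false.
  apply/negbTE/eqP => E; move/eqP: Hm; apply; by rewrite -E enum_valK.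
by rewrite mulr0.
Qed.

Lemma monop1 : @monop n id (fun _ => 1) = 1%:M.
Proof.
apply/matrixP => k l; rewrite !mxE /=.
case: (eqVneq k l) => [->|H]; first by rewrite eqxx.
have -> : (enum_val k == enum_val l) = false.
  by apply/negbTE; apply: contra H => /eqP/enum_val_inj ->.
by [].
Qed.

Lemma monop_eq f f' c c' : (forall x, c x != 0) ->
  monop f c = monop f' c' -> (forall x, f x = f' x /\ c x = c' x).
Proof.
move=> nz E x.
have := congr1 (fun M : op_t n => M (enum_rank (f x)) (enum_rank x)) E.
rewrite /= !mxE !enum_rankK eqxx.
case: eqP => [<- -> //|_ H]; by move: (nz x); rewrite H eqxx.
Qed.

End Monop.

Definition sgn (a : 'F_2) : algC := (-1) ^+ val a.

Lemma sgn0 : sgn 0 = 1. Proof. by []. Qed.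
Lemma sgn1 : sgn 1 = -1. Proof. by rewrite /sgn /= expr1. Qed.
Lemma sgnD a b : sgn (a + b) = sgn a * sgn b.
Proof.
case: (F2P a) => ->; case: (F2P b) => ->; rewrite ?add0r ?addr0 ?sgn0 ?mul1r ?mulr1 //.
have -> : (1 + 1 : 'F_2) = 0 by apply/eqP.
by rewrite sgn0 sgn1 mulrNN mulr1.
Qed.
Lemma sgn_sq a : sgn a * sgn a = 1.
Proof. by rewrite -sgnD; have -> : a + a = 0 by case: (F2P a) => ->; apply/eqP. Qed.
Lemma sgn_neq0 a : sgn a != 0.
Proof. by case: (F2P a) => ->; rewrite ?sgn0 ?sgn1 ?oppr_eq0 oner_neq0. Qed.
Lemma N1_neq1 : (-1 : algC) != 1.
Proof. by rewrite -subr_eq0 -opprD oppr_eq0 -(natrD _ 1 1) pnatr_eq0. Qed.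
Lemma sgn_inj a b : sgn a = sgn b -> a = b.
Proof.
case: (F2P a) => ->; case: (F2P b) => -> //; rewrite sgn0 sgn1 => E.
  by have := N1_neq1; rewrite -E eqxx.
by have := N1_neq1; rewrite E eqxx.
Qed.
Lemma sgn_sum (I : Type) (r : seq I) (P : pred I) (F : I -> 'F_2) :
  sgn (\sum_(i <- r | P i) F i) = \prod_(i <- r | P i) sgn (F i).
Proof. exact: (big_morph _ sgnD sgn0). Qed.

Lemma expN1_sgn (k : nat) : (-1) ^+ k = sgn (k%:R) :> algC.
Proof.
elim: k => [//|k IH]; by rewrite exprS IH mulrS sgnD sgn1.
Qed.
Lemma valF2K (a : 'F_2) : (val a)%:R = a.
Proof. by case: (F2P a) => ->. Qed.

Section Vec.
Variable n : nat.
Implicit Types (x y : bits n).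

Lemma bit_add x y i : bit (x + y) i = val (x i ord0 + y i ord0).
Proof. by rewrite /bit mxE. Qed.

Lemma addxx x : x + x = 0.
Proof. apply/matrixP => i j; rewrite !mxE; by case: (F2P (x i j)) => ->; apply/eqP. Qed.

Definition ev (i : 'I_n) : bits n := delta_mx i ord0.
Lemma ev_entry i k : ev i k ord0 = (k == i)%:R.
Proof. by rewrite /ev mxE eqxx andbT. Qed.
Lemma bit_ev i k : bit (ev i) k = (k == i).
Proof. by rewrite /bit ev_entry; case: eqP. Qed.

Definition beta (M : 'M['F_2]_n) x y : 'F_2 := (x^T *m M *m y) ord0 ord0.

Lemma betaE M x y : beta M x y = \sum_i \sum_j x i ord0 * M i j * y j ord0.
Proof.
rewrite /beta mxE [RHS]exchange_big; apply: eq_bigr => j _; rewrite mxE mulr_suml.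
by apply: eq_bigr => i _; rewrite mxE.
Qed.

Lemma beta_ev M i j : beta M (ev i) (ev j) = M i j.
Proof. by rewrite /beta /ev trmx_delta -rowE -colE !mxE. Qed.

Definition isQ (c : bits n -> algC) (M : 'M['F_2]_n) : Prop :=
  c 0 = 1 /\ forall x y, c (x + y) = c x * c y * sgn (beta M x y).

Lemma Q_neq0 c M : isQ c M -> forall x, c x != 0.
Proof.
move=> [c0 cD] x; apply/negP => /eqP cx.
by move: (cD x x); rewrite addxx c0 cx !mul0r; apply/eqP; rewrite oner_neq0.
Qed.

Lemma Q_one : isQ (fun _ => 1) 0.
Proof. split=> // x y; by rewrite /beta mulmx0 mul0mx mxE sgn0 !mulr1. Qed.

Lemma betaDM M N x y : beta (M + N) x y = beta M x y + beta N x y.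
Proof. by rewrite /beta mulmxDr mulmxDl mxE. Qed.

Lemma Q_mul c d M N : isQ c M -> isQ d N -> isQ (fun x => c x * d x) (M + N).
Proof.
move=> [c0 cD] [d0 dD]; split; first by rewrite c0 d0 mulr1.
move=> x y; rewrite cD dD betaDM sgnD; ring.
Qed.

Lemma Q_lin c M (A : 'M['F_2]_n) : isQ c M -> isQ (fun x => c (A *m x)) (A^T *m M *m A).
Proof.
move=> [c0 cD]; split; first by rewrite mulmx0.
move=> x y; rewrite mulmxDr cD /beta trmx_mul !mulmxA.
by [].
Qed.

Lemma Q_inv c M : isQ c M -> isQ (fun x => (c x)^-1) M.
Proof.
move=> [c0 cD]; split; first by rewrite c0 invr1.
move=> x y; rewrite cD !invfM; congr (_ * _).
by case: (F2P (beta M x y)) => ->; rewrite ?sgn0 ?sgn1 ?invr1 ?invrN ?invr1.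
Qed.

Lemma Q_basis c d M : isQ c M -> isQ d M -> (forall i, c (ev i) = d (ev i)) ->
  forall x, c x = d x.
Proof.
move=> [c0 cD] [d0 dD] Hb x.
have -> : x = \sum_(i < n) x i ord0 *: ev i.
  rewrite {1}[x]matrix_sum_delta; apply: eq_bigr => i _; by rewrite big_ord1.
apply: (big_ind (fun y => c y = d y)); first by rewrite c0 d0.
  by move=> y z Hy Hz; rewrite cD dD Hy Hz.
move=> i _; case: (F2P (x i ord0)) => ->; last by rewrite scale1r.
by rewrite scale0r c0 d0.
Qed.

End Vec.

Section Phases.
Variable n : nat.
Implicit Types (x y v b : bits n) (B : 'M['F_2]_n).

Definition Zph v : bits n -> algC :=
  (fun x => (-1) ^+ (\sum_(i < n) bit v i * bit x i)%N).
Definition Pph b : bits n -> algC :=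
  (fun x => 'i ^+ (\sum_(i < n) bit b i * bit x i)%N).
Definition ZBph B : bits n -> algC :=
  (fun x => (-1) ^+ (\sum_(i < n) \sum_(j < n | (i < j)%N)
                                 val (B i j) * bit x i * bit x j)%N).

Lemma ZgateE v : Zgate v = monop id (Zph v). Proof. by []. Qed.
Lemma PgateE b : Pgate b = monop id (Pph b). Proof. by []. Qed.
Lemma ZBgateE B : ZBgate B = monop id (ZBph B). Proof. by []. Qed.

Definition lin v x : 'F_2 := \sum_(i < n) v i ord0 * x i ord0.
Definition qf B x : 'F_2 := \sum_(i < n) \sum_(j < n | (i < j)%N) B i j * x i ord0 * x j ord0.

Lemma Zph_sgn v x : Zph v x = sgn (lin v x).
Proof.
rewrite /Zph expN1_sgn natr_sum /lin; congr sgn; apply: eq_bigr => i _.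
by rewrite natrM !valF2K.
Qed.

Lemma ZBph_sgn B x : ZBph B x = sgn (qf B x).
Proof.
rewrite /ZBph expN1_sgn natr_sum /qf; congr sgn; apply: eq_bigr => i _.
rewrite natr_sum; apply: eq_bigr => j _.
by rewrite !natrM !valF2K.
Qed.

Lemma Pph_prod b x : Pph b x = \prod_i 'i ^+ (bit b i * bit x i).
Proof. exact: (big_morph _ (exprD _) (expr0 _)). Qed.

Lemma Q_Z v : isQ (Zph v) 0.
Proof.
split.
  by rewrite Zph_sgn /lin big1 ?sgn0 // => i _; rewrite mxE mulr0.
move=> x y; rewrite !Zph_sgn /beta mulmx0 mul0mx mxE sgn0 mulr1 -sgnD.
by congr sgn; rewrite /lin -big_split; apply: eq_bigr => i _; rewrite mxE mulrDr.
Qed.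

Definition Dg b : 'M['F_2]_n := \matrix_(i, j) ((i == j)%:R * b i ord0).

Lemma term_P (a u w : 'F_2) :
  'i ^+ (val a * val (u + w)) = 'i ^+ (val a * val u) * 'i ^+ (val a * val w) * sgn (u * a * w) :> algC.
Proof.
have h11 : (1 + 1 : 'F_2) = 0 by apply/eqP.
case: (F2P a) => ->; case: (F2P u) => ->; case: (F2P w) => ->;
 rewrite ?h11 ?addr0 ?add0r ?mulr0 ?mul0r ?mulr1 ?mul1r /= ?sgn0 ?sgn1 ?expr0 ?expr1 ?mulr1 ?mul1r //.
by rewrite -expr2 sqrCi mulrNN mulr1.
Qed.

Lemma Q_P b : isQ (Pph b) (Dg b).
Proof.
split.
  by rewrite Pph_prod big1 // => i _; rewrite /bit mxE muln0.
move=> x y; rewrite !Pph_prod.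
have -> : beta (Dg b) x y = \sum_i x i ord0 * b i ord0 * y i ord0.
  rewrite betaE; apply: eq_bigr => i _.
  rewrite (bigD1 i) //= big1 ?addr0; first by rewrite mxE eqxx mul1r.
  by move=> j /negbTE Hj; rewrite mxE eq_sym Hj mul0r mulr0 mul0r.
rewrite sgn_sum -!big_split /=; apply: eq_bigr => i _.
by rewrite /bit mxE term_P.
Qed.

Lemma Bsym B : Bset B -> forall i j, B j i = B i j.
Proof. by move=> [Bt _] i j; rewrite -{1}Bt mxE. Qed.

Lemma qf_add B x y : Bset B -> qf B (x + y) = qf B x + qf B y + beta B x y.
Proof.
move=> HB; have Bs := Bsym HB; have Bd := HB.2.
have -> : beta B x y = \sum_(i < n) \sum_(j < n | (i < j)%N)
          (B i j * x i ord0 * y j ord0 + B i j * y i ord0 * x j ord0).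
  rewrite betaE.
  have step : forall i, \sum_j x i ord0 * B i j * y j ord0 =
     \sum_(j < n | (i < j)%N) x i ord0 * B i j * y j ord0 +
     \sum_(j < n | (j < i)%N) x i ord0 * B i j * y j ord0.
    move=> i; rewrite (bigID (fun j : 'I_n => (i < j)%N)) /=; congr (_ + _).
    rewrite (bigID (fun j : 'I_n => (j < i)%N)) /= [X in _ + X]big1 ?addr0.
      rewrite (eq_bigl (fun j : 'I_n => (j < i)%N)) // => j.
      by case: (ltnP j i) => H; rewrite ?andbT ?andbF // -leqNgt ltnW.
    move=> j /andP [H1 H2]; have -> : j = i.
      by apply: val_inj; apply/eqP; rewrite eqn_leq (leqNgt j i) (leqNgt i j) H1 H2.
    by rewrite Bd mulr0 mul0r.
  rewrite (eq_bigr _ (fun i _ => step i)) big_split /=.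
  rewrite [X in _ + X](exchange_big_dep xpredT) //=.
  under [RHS]eq_bigr => i _ do rewrite big_split.
  rewrite big_split /=.
  congr (_ + _); apply: eq_bigr => i _; apply: eq_bigr => j _; first ring.
  by rewrite (Bs j i); ring.
rewrite /qf -!big_split /=; apply: eq_bigr => i _; rewrite -!big_split /=.
by apply: eq_bigr => j _; rewrite !mxE; ring.
Qed.

Lemma Q_ZB B : Bset B -> isQ (ZBph B) B.
Proof.
move=> HB; split.
  rewrite ZBph_sgn /qf big1 ?sgn0 // => i _; rewrite big1 // => j _.
  by rewrite !mxE mulr0.
by move=> x y; rewrite !ZBph_sgn qf_add // !sgnD.
Qed.

Lemma Zph_ev v i : Zph v (ev i) = sgn (v i ord0).
Proof.
rewrite Zph_sgn /lin (bigD1 i) //= big1 ?addr0; first by rewrite ev_entry eqxx mulr1.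
by move=> j /negbTE Hj; rewrite ev_entry Hj mulr0.
Qed.

Lemma Pph_ev b i : Pph b (ev i) = 'i ^+ (bit b i).
Proof.
rewrite Pph_prod (bigD1 i) //= big1 ?mulr1; first by rewrite bit_ev eqxx muln1.
by move=> j /negbTE Hj; rewrite bit_ev Hj muln0.
Qed.

Lemma ZBph_ev B i : ZBph B (ev i) = 1.
Proof.
rewrite ZBph_sgn /qf big1 ?sgn0 // => k _; rewrite big1 // => l Hkl.
rewrite !ev_entry; case: (eqVneq k i) => [Ek|]; last by rewrite mulr0 mul0r.
case: (eqVneq l i) => [El|]; last by rewrite mulr0.
by move: Hkl; rewrite Ek El ltnn.
Qed.

End Phases.

Section Repr.
Variable n : nat.
Implicit Types (x y v b : bits n) (B M : 'M['F_2]_n).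

Definition phi v b B x := Zph v x * Pph b x * ZBph B x.

Lemma Q_phi v b B : Bset B -> isQ (phi v b B) (0 + Dg b + B).
Proof. by move=> HB; apply: Q_mul; [apply: Q_mul; [apply: Q_Z|apply: Q_P]|apply: Q_ZB]. Qed.

Lemma phi_ev v b B i : phi v b B (ev i) = sgn (v i ord0) * 'i ^+ (bit b i).
Proof. by rewrite /phi Zph_ev Pph_ev ZBph_ev mulr1. Qed.

Lemma wsq (a : 'F_2) : ('i ^+ val a) * ('i ^+ val a) = sgn a :> algC.
Proof.
case: (F2P a) => ->; rewrite /= ?expr0 ?mulr1 ?sgn0 ?sgn1 //.
by rewrite expr1 -expr2 sqrCi.
Qed.

Lemma Q_repr c M : M^T = M -> isQ c M ->
  exists v b B, Bset B /\ forall x, c x = phi v b B x.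
Proof.
move=> Mt Qc.
pose b : bits n := \col_i M i i.
pose B : 'M['F_2]_n := \matrix_(i, j) if i == j then 0 else M i j.
pose v : bits n := \col_i (if c (ev i) == 'i ^+ bit b i then 0 else 1).
have HB : Bset B.
  split; last by move=> i; rewrite mxE eqxx.
  apply/matrixP => i j; rewrite !mxE eq_sym; case: eqP => // _.
  by rewrite -{1}Mt mxE.
have EM : 0 + Dg b + B = M.
  apply/matrixP => i j; rewrite !mxE add0r; case: eqP => [->|_].
    by rewrite mul1r addr0.
  by rewrite mul0r add0r.
exists v, b, B; split => //.
have Qp := Q_phi v b HB; rewrite EM in Qp.
apply: (Q_basis Qc Qp) => i.
rewrite phi_ev.
have Hb : bit b i = val (M i i) by rewrite /bit mxE.
have c2 : c (ev i) * c (ev i) = 'i ^+ bit b i * 'i ^+ bit b i.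
  rewrite Hb wsq; have [c0 cD] := Qc.
  have := cD (ev i) (ev i); rewrite addxx c0 beta_ev => E.
  by rewrite -[LHS]mulr1 -(sgn_sq (M i i)) mulrA -E mul1r.
have : (c (ev i) - 'i ^+ bit b i) * (c (ev i) + 'i ^+ bit b i) == 0.
  by apply/eqP; rewrite mulrDr !mulrBl c2; ring.
rewrite mulf_eq0 subr_eq0 addr_eq0 mxE => /orP [/eqP E|/eqP E].
  by rewrite E eqxx sgn0 mul1r.
rewrite E; case: ifP => [/eqP E'|_]; last by rewrite sgn1 mulN1r.
by rewrite sgn0 mul1r E'.
Qed.

Lemma Q_unique_mat c M N : isQ c M -> isQ c N -> M = N.
Proof.
move=> Qm Qn; have nz := Q_neq0 Qm; have [_ cM] := Qm; have [_ cN] := Qn.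
apply/matrixP => i j; rewrite -!(beta_ev _ i j); apply: sgn_inj.
have := cM (ev i) (ev j); rewrite cN => /mulfI -> //.
by rewrite mulf_neq0.
Qed.

Lemma phi_unique v b B v' b' B' : Bset B -> Bset B' ->
  (forall x, phi v b B x = phi v' b' B' x) -> [/\ v' = v, b' = b & B' = B].
Proof.
move=> HB HB' E.
have Q1 := Q_phi v b HB; have Q2 := Q_phi v' b' HB'.
have Q2' : isQ (phi v b B) (0 + Dg b' + B').
  by case: Q2 => h1 h2; split => [|x y]; rewrite !E.
have EM := Q_unique_mat Q1 Q2'.
have Eb : b' = b.
  apply/matrixP => i j; rewrite !ord1.
  have := congr1 (fun M : 'M['F_2]_n => M i i) EM; rewrite !mxE !eqxx !mul1r.
  by rewrite !add0r (proj2 HB i) (proj2 HB' i) !addr0 => ->.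
have EB : B' = B.
  apply/matrixP => i j; case: (eqVneq i j) => [->|Hij]; first by rewrite (proj2 HB j) (proj2 HB' j).
  have := congr1 (fun M : 'M['F_2]_n => M i j) EM; rewrite !mxE (negbTE Hij).
  by rewrite !mul0r !add0r.
split => //; apply/matrixP => i j; rewrite !ord1.
have := E (ev i); rewrite !phi_ev Eb => /mulIf; move/(_ _)/sgn_inj => -> //.
by rewrite expf_neq0 // neq0Ci.
Qed.

End Repr.

Section Grp.
Variable n : nat.
Implicit Types (x y v b : bits n) (A B M : 'M['F_2]_n) (c d : bits n -> algC).

Definition Sset (U : op_t n) : Prop :=
  exists A c M, [/\ A \in unitmx, M^T = M, isQ c M & U = monop (mulmx A) c].

Lemma monop_mulA A A' c c' : monop (mulmx A) c *m monop (mulmx A') c' =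
  monop (mulmx (A *m A')) (fun x => c (A' *m x) * c' x).
Proof. by rewrite monop_mul; apply: eq_monop => x //=; rewrite mulmxA. Qed.

Lemma monop_inv A c : A \in unitmx -> (forall x, c x != 0) ->
  invmx (monop (mulmx A) c) =
  monop (mulmx (invmx A)) (fun x => (c (invmx A *m x))^-1).
Proof.
move=> uA nz.
have E : monop (mulmx A) c *m monop (mulmx (invmx A)) (fun x => (c (invmx A *m x))^-1)
   = 1%:M.
  rewrite monop_mulA -monop1; apply: eq_monop => x /=.
    by rewrite mulmxV ?mul1mx.
  by rewrite mulfV.
have [uM _] := mulmx1_unit E.
by rewrite -[RHS]mul1mx -(mulVmx uM) -mulmxA E mulmx1.
Qed.

Lemma trmxDF M N : (M + N)^T = M^T + N^T.
Proof. by apply/matrixP => i j; rewrite !mxE. Qed.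

Lemma S_one : Sset 1%:M.
Proof.
exists 1%:M, (fun _ => 1), 0; split; rewrite ?unitmx1 ?trmx0 //; first exact: Q_one.
by rewrite -monop1; apply: eq_monop => x //=; rewrite mul1mx.
Qed.

Lemma S_mul U V : Sset U -> Sset V -> Sset (U *m V).
Proof.
move=> [A [c [M [uA Mt Qc ->]]]] [A' [c' [M' [uA' Mt' Qc' ->]]]].
exists (A *m A'), (fun x => c (A' *m x) * c' x), (A'^T *m M *m A' + M'); split.
- by rewrite unitmx_mul uA uA'.
- by rewrite trmxDF Mt' !trmx_mul trmxK Mt mulmxA.
- exact: Q_mul (Q_lin A' Qc) Qc'.
- exact: monop_mulA.
Qed.

Lemma S_inv U : Sset U -> Sset (invmx U).
Proof.
move=> [A [c [M [uA Mt Qc ->]]]].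
exists (invmx A), (fun x => (c (invmx A *m x))^-1), ((invmx A)^T *m M *m invmx A); split.
- by rewrite unitmx_inv.
- by rewrite !trmx_mul trmxK Mt mulmxA.
- exact: Q_inv (Q_lin (invmx A) Qc).
- exact: monop_inv (Q_neq0 Qc).
Qed.

Lemma Dg_sym b : (Dg b)^T = Dg b.
Proof. by apply/matrixP => i j; rewrite !mxE eq_sym; case: eqP => [->|_] //; rewrite !mul0r. Qed.

Lemma Bset_CZ (i j : 'I_n) : i != j -> Bset (delta_mx i j + delta_mx j i).
Proof.
move=> Hij; split.
  by apply/matrixP => k l; rewrite !mxE addrC (andbC (l == i)) (andbC (l == j)).
move=> k; rewrite !mxE; case: (eqVneq k i) => [->|Hk].
  by rewrite (negbTE Hij) andbF andFb addr0.
by rewrite andbF andFb addr0.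
Qed.

Lemma CNOT_sq (i j : 'I_n) : i != j ->
  (1%:M + delta_mx i j) *m (1%:M + delta_mx i j) = 1%:M :> 'M['F_2]_n.
Proof.
move=> Hij; rewrite mulmxDl !mulmxDr !mul1mx mulmx1 mul_delta_mx_cond eq_sym (negbTE Hij).
rewrite mulr0n addr0 -addrA.
have -> : delta_mx i j + delta_mx i j = 0 :> 'M['F_2]_n.
  by apply/matrixP => k l; rewrite !mxE; case: (_ && _); apply/eqP.
by rewrite addr0.
Qed.

Lemma CNOT_unit (i j : 'I_n) : i != j -> (1%:M + delta_mx i j : 'M['F_2]_n) \in unitmx.
Proof. by move=> Hij; case: (mulmx1_unit (CNOT_sq Hij)). Qed.

Lemma XS A : A \in unitmx -> Sset (Xgate A).
Proof.
by move=> uA; exists A, (fun _ => 1), 0; split; rewrite ?trmx0 //; apply: Q_one.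
Qed.

Lemma diagS c M : M^T = M -> isQ c M -> Sset (monop id c).
Proof.
move=> Mt Qc; exists 1%:M, c, M; split => //; first exact: unitmx1.
by apply: eq_monop => x //=; rewrite mul1mx.
Qed.

Lemma Gens_S U : Gens U -> Sset U.
Proof.
case=> [[i ->]|[[i [j [Hij ->]]]|[i [j [Hij ->]]]]].
- by apply: (diagS (Dg_sym _)); apply: Q_P.
- by apply: (diagS (proj1 (Bset_CZ Hij))); apply: Q_ZB; apply: Bset_CZ.
- exact: XS (CNOT_unit Hij).
Qed.

Lemma G_S U : Ggrp U -> Sset U.
Proof.
elim=> {U} [|U /Gens_S //|U V _ HU _ HV|U _ HU]; first exact: S_one.
- exact: S_mul.
- exact: S_inv.
Qed.

End Grp.

Section NGrp.
Variable n : nat.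
Implicit Types (x y v b : bits n) (A B M : 'M['F_2]_n) (c d : bits n -> algC).

Definition Nset (U : op_t n) : Prop :=
  exists c M, [/\ M^T = M, isQ c M & U = monop id c].

Lemma monop_idmul c d : monop id c *m monop id d = monop id (fun x => c x * d x).
Proof. by rewrite monop_mul. Qed.

Lemma monop_idinv c : (forall x, c x != 0) -> invmx (monop id c) = monop id (fun x => (c x)^-1).
Proof.
move=> nz.
have -> : monop id c = monop (mulmx 1%:M) c by apply: eq_monop => x //=; rewrite mul1mx.
rewrite monop_inv ?unitmx1 // invmx1; apply: eq_monop => x /=; by rewrite mul1mx.
Qed.

Lemma N_Nset U : Ngrp U -> Nset U.
Proof.
elim=> {U} [|U HU|U V _ [c [M [Mt Qc ->]]] _ [d [N [Nt Qd ->]]]|U _ [c [M [Mt Qc ->]]]].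
- exists (fun _ => 1), 0; split; rewrite ?trmx0 ?monop1 //; exact: Q_one.
- case: HU => [[i ->]|[i [j [Hij ->]]]].
    by exists (Pph (delta_mx i ord0)), (Dg (delta_mx i ord0)); split; [apply: Dg_sym|apply: Q_P|].
  exists (ZBph (delta_mx i j + delta_mx j i)), (delta_mx i j + delta_mx j i); split => //.
    exact: (proj1 (Bset_CZ Hij)).
  by apply: Q_ZB; apply: Bset_CZ.
- exists (fun x => c x * d x), (M + N); split; rewrite ?monop_idmul //.
    by rewrite trmxDF Mt Nt.
  exact: Q_mul.
- exists (fun x => (c x)^-1), M; split => //; first exact: Q_inv.
  exact: monop_idinv (Q_neq0 Qc).
Qed.

Lemma gen_prod (S : op_t n -> Prop) (I : Type) (r : seq I) (P : pred I)
   (F : I -> bits n -> algC) :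
  (forall i, P i -> gen S (monop id (F i))) ->
  gen S (monop id (fun x => \prod_(i <- r | P i) F i x)).
Proof.
move=> HF; elim: r => [|a r IH].
  have -> : monop id (fun x => \prod_(i <- [::] | P i) F i x) = monop id (fun _ => 1).
    by apply: eq_monop => x //; rewrite big_nil.
  rewrite monop1; exact: gen_one.
case Pa: (P a).
  have -> : monop id (fun x => \prod_(i <- a :: r | P i) F i x) =
    monop id (F a) *m monop id (fun x => \prod_(i <- r | P i) F i x).
    by rewrite monop_idmul; apply: eq_monop => x //; rewrite big_cons Pa.
  by apply: gen_mul => //; apply: HF.
have -> : monop id (fun x => \prod_(i <- a :: r | P i) F i x) =
  monop id (fun x => \prod_(i <- r | P i) F i x).
  by apply: eq_monop => x //; rewrite big_cons Pa.
exact: IH.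
Qed.

Lemma const1_gen (S : op_t n -> Prop) c : (forall x, c x = 1) -> gen S (monop id c).
Proof.
move=> H; have -> : monop id c = monop id (fun _ => 1) by apply: eq_monop.
by rewrite monop1; apply: gen_one.
Qed.

Lemma Pph_evx i x : Pph (ev i) x = 'i ^+ (bit x i).
Proof.
rewrite /Pph (bigD1 i) //= big1 ?addn0; first by rewrite bit_ev eqxx mul1n.
by move=> j /negbTE Hj; rewrite bit_ev Hj.
Qed.

Lemma P_N b : Ngrp (Pgate b).
Proof.
rewrite PgateE; have -> : monop id (Pph b) =
    monop id (fun x => \prod_(i <- index_enum 'I_n | true) 'i ^+ (bit b i * bit x i)).
  by apply: eq_monop => x //; rewrite Pph_prod.
apply: gen_prod => i _; case: (F2P (b i ord0)) => Hb.
  by apply: const1_gen => x; rewrite /bit Hb.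
have -> : monop id (fun x => 'i ^+ (bit b i * bit x i)) = Pi i.
  rewrite /Pi PgateE; apply: eq_monop => x //=.
  by rewrite -[delta_mx i ord0]/(ev i) Pph_evx /bit Hb mul1n.
by apply: gen_base; left; exists i.
Qed.

Lemma Z_N v : Ngrp (Zgate v).
Proof.
have -> : Zgate v = Pgate v *m Pgate v.
  rewrite PgateE monop_idmul ZgateE; apply: eq_monop => x //=.
  by rewrite /Zph /Pph -exprMn -expr2 sqrCi.
by apply: gen_mul; apply: P_N.
Qed.

Lemma CZ_ph (i j : 'I_n) x : (i < j)%N ->
  ZBph (delta_mx i j + delta_mx j i) x = (-1) ^+ (bit x i * bit x j).
Proof.
move=> Hij; have Hne : i != j by rewrite neq_ltn Hij.
rewrite ZBph_sgn expN1_sgn natrM !valF2K /qf (bigD1 i) //= (bigD1 j) //=.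
rewrite big1 ?addr0; last first.
  move=> l /andP [Hl Hlj]; rewrite !mxE eqxx (negbTE Hlj) /= (negbTE Hne).
  by rewrite /= add0r !mul0r.
rewrite [X in _ + X]big1 ?addr0; last first.
  move=> k Hk; rewrite big1 // => l Hkl; rewrite !mxE (negbTE Hk) /=.
  case: (eqVneq k j) => [Ekj|]; last by rewrite add0r !mul0r.
  case: (eqVneq l i) => [Eli|]; last by rewrite add0r !mul0r.
  by move: Hkl; rewrite Ekj Eli ltnNge ltnW.
by rewrite !mxE !eqxx (negbTE Hne) (eq_sym j i) (negbTE Hne) /= addr0 mul1r.
Qed.

Lemma ZB_N B : Bset B -> Ngrp (ZBgate B).
Proof.
move=> HB; rewrite ZBgateE.
have -> : monop id (ZBph B) = monop id (fun x =>
   \prod_(p : 'I_n * 'I_n | (p.1 < p.2)%N)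
      (-1) ^+ (val (B p.1 p.2) * bit x p.1 * bit x p.2)).
  apply: eq_monop => x //=; rewrite /ZBph.
  rewrite (big_morph _ (exprD _) (expr0 _)).
  under eq_bigr => i _ do rewrite (big_morph _ (exprD _) (expr0 _)).
  by rewrite pair_big_dep.
apply: gen_prod => p Hp; case: (F2P (B p.1 p.2)) => Hb.
  by apply: const1_gen => x; rewrite Hb.
have Hne : p.1 != p.2 by rewrite neq_ltn Hp.
have -> : monop id (fun x => (-1) ^+ (val (B p.1 p.2) * bit x p.1 * bit x p.2)) = CZ p.1 p.2.
  rewrite /CZ ZBgateE; apply: eq_monop => x //=.
  by rewrite CZ_ph // Hb mul1n.
by apply: gen_base; right; exists p.1, p.2.
Qed.

Lemma Nset_N U : Nset U -> Ngrp U.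
Proof.
move=> [c [M [Mt Qc ->]]].
have [v [b [B [HB Ec]]]] := Q_repr Mt Qc.
have -> : monop id c = Zgate v *m Pgate b *m ZBgate B.
  by rewrite ZgateE PgateE ZBgateE !monop_idmul; apply: eq_monop => x //; rewrite Ec.
by apply: gen_mul; [apply: gen_mul; [apply: Z_N|apply: P_N]|apply: ZB_N].
Qed.

End NGrp.

Section XGrp.
Variable n : nat.
Implicit Types (A B C M P : 'M['F_2]_n).

Definition Xg A := Xgrp (Xgate A).

Lemma Xgate_mul A A' : Xgate A *m Xgate A' = Xgate (A *m A').
Proof. by rewrite /Xgate monop_mulA; apply: eq_monop => x //=; rewrite mulr1. Qed.

Lemma Xgate1 : Xgate (1%:M : 'M['F_2]_n) = 1%:M.
Proof. by rewrite -monop1; apply: eq_monop => x //=; rewrite mul1mx. Qed.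

Lemma Xgate_inv A : A \in unitmx -> invmx (Xgate A) = Xgate (invmx A).
Proof.
move=> uA; rewrite /Xgate monop_inv //; last by move=> x; rewrite oner_neq0.
by apply: eq_monop => x //=; rewrite invr1.
Qed.

Lemma Xg_one : Xg 1%:M. Proof. by rewrite /Xg Xgate1; apply: gen_one. Qed.
Lemma Xg_mul A A' : Xg A -> Xg A' -> Xg (A *m A').
Proof. by rewrite /Xg -Xgate_mul; apply: gen_mul. Qed.
Lemma Xg_inv A : A \in unitmx -> Xg A -> Xg (invmx A).
Proof. by move=> uA; rewrite /Xg -Xgate_inv //; apply: gen_inv. Qed.
Lemma Xg_T (i j : 'I_n) : i != j -> Xg (1%:M + delta_mx i j).
Proof. by move=> Hij; apply: gen_base; exists i, j. Qed.

Lemma X_Xset U : Xgrp U -> exists A, A \in unitmx /\ U = Xgate A.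
Proof.
elim=> {U} [|U [i [j [Hij ->]]]|U V _ [A [uA ->]] _ [A' [uA' ->]]|U _ [A [uA ->]]].
- by exists 1%:M; rewrite unitmx1 Xgate1.
- by exists (1%:M + delta_mx i j); rewrite CNOT_unit.
- by exists (A *m A'); rewrite Xgate_mul unitmx_mul uA uA'.
- by exists (invmx A); rewrite Xgate_inv // unitmx_inv.
Qed.

Lemma delta_mul_entry (a b : 'I_n) C l m :
  (delta_mx a b *m C) l m = (l == a)%:R * C b m.
Proof.
rewrite mxE (bigD1 b) //= big1 ?addr0; first by rewrite mxE eqxx andbT.
by move=> p /negbTE Hp; rewrite mxE Hp andbF mul0r.
Qed.

Lemma rowadd_tg (kk : 'I_n) (u : 'I_n -> 'F_2) (r : seq 'I_n) :
  Xg (1%:M + \sum_(i <- r | i != kk) u i *: delta_mx i kk) /\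
  (1%:M + \sum_(i <- r | i != kk) u i *: delta_mx i kk) \in unitmx.
Proof.
elim: r => [|a r [IH1 IH2]].
  by rewrite big_nil addr0; split; [apply: Xg_one|apply: unitmx1].
rewrite big_cons; case: (eqVneq a kk) => [_|Ha] //=.
have -> : 1%:M + (u a *: delta_mx a kk + \sum_(i <- r | i != kk) u i *: delta_mx i kk)
   = (1%:M + u a *: delta_mx a kk) *m (1%:M + \sum_(i <- r | i != kk) u i *: delta_mx i kk).
  rewrite mulmxDl !mulmxDr !mul1mx mulmx1.
  have -> : u a *: delta_mx a kk *m \sum_(i <- r | i != kk) u i *: delta_mx i kk = 0.
    rewrite mulmx_sumr big1_seq // => i /andP [Hi _].
    by rewrite -scalemxAl -scalemxAr mul_delta_mx_0 ?scaler0 // eq_sym.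
  by rewrite addr0 -!addrA (addrC (u a *: _)).
case: (F2P (u a)) => ->; first by rewrite scale0r addr0 mul1mx.
rewrite scale1r; split; first by apply: Xg_mul => //; apply: Xg_T.
by rewrite unitmx_mul IH2 CNOT_unit.
Qed.

Lemma rowadd_entry (kk : 'I_n) (u : 'I_n -> 'F_2) C l m :
  ((1%:M + \sum_(i | i != kk) u i *: delta_mx i kk) *m C) l m =
  C l m + (if l != kk then u l * C kk m else 0).
Proof.
rewrite mulmxDl mul1mx mulmx_suml mxE summxE; congr (_ + _).
under eq_bigr => i _ do rewrite -scalemxAl mxE delta_mul_entry.
case: (eqVneq l kk) => [->|Hl] /=.
  by rewrite big1 // => i /negbTE Hi; rewrite eq_sym Hi mul0r mulr0.
rewrite (bigD1 l) //= big1 ?addr0; first by rewrite eqxx mul1r.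
by move=> i /andP [_ /negbTE Hi]; rewrite eq_sym Hi mul0r mulr0.
Qed.

End XGrp.

Section Elim.
Variable n : nat.
Implicit Types (A B C M P : 'M['F_2]_n).

Lemma F2_10 : (1 : 'F_2) != 0. Proof. by []. Qed.
Lemma F2_xx (a : 'F_2) : a + a = 0. Proof. by case: (F2P a) => ->; apply/eqP. Qed.

Lemma pivot_exists k (Hk : (k < n)%N) A : A \in unitmx ->
  (forall i (j : 'I_n), (j < k)%N -> A i j = (i == j)%:R) ->
  exists r : 'I_n, (k <= r)%N /\ A r (Ordinal Hk) = 1.
Proof.
move=> uA HA; set kk := Ordinal Hk.
case: (boolP [exists r : 'I_n, (k <= r)%N && (A r kk == 1)]).
  by move=> /existsP [r /andP [H1 /eqP H2]]; exists r.
move/existsPn => Hno; exfalso.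
have H0 : forall r : 'I_n, (k <= r)%N -> A r kk = 0.
  move=> r Hr; have := Hno r; rewrite Hr /=.
  by case: (F2P (A r kk)) => ->; rewrite ?eqxx.
pose w : 'cV['F_2]_n := \col_l (if (l < k)%N then A l kk else if l == kk then 1 else 0).
have Aw : A *m w = 0.
  apply/matrixP => i j; rewrite !mxE (bigD1 kk) //= mxE ltnn eqxx mulr1.
  have Hterm : forall l : 'I_n, l != kk -> A i l * w l j =
      (l == i)%:R * (if (i < k)%N then A i kk else 0).
    move=> l Hl; rewrite mxE (negbTE Hl).
    case: (ltnP l k) => Hlk.
      rewrite HA //; case: (eqVneq l i) => [Eli|Hli]; last by rewrite !mul0r.
      by rewrite -Eli Hlk.
    rewrite mulr0; case: (eqVneq l i) => [Eli|]; last by rewrite mul0r.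
    by rewrite -Eli ltnNge Hlk mulr0.
  rewrite (eq_bigr _ Hterm).
  case: (eqVneq i kk) => [->|Hi].
    rewrite ltnn big1 ?addr0; first exact: H0.
    by move=> l _; rewrite mulr0.
  rewrite (bigD1 i) //= big1 ?addr0; last first.
    by move=> l /andP [_ /negbTE ->]; rewrite mul0r.
  rewrite eqxx mul1r; case: (ltnP i k) => Hik; first exact: F2_xx.
  by rewrite addr0 H0.
have w0 : w = 0 by rewrite -[w]mul1mx -(mulVmx uA) -mulmxA Aw mulmx0.
by move/matrixP: w0 => /(_ kk ord0); rewrite !mxE ltnn eqxx.
Qed.

Lemma elim_step k (Hk : (k < n)%N) A : A \in unitmx ->
  (forall i (j : 'I_n), (j < k)%N -> A i j = (i == j)%:R) ->
  exists P, [/\ Xg P, P \in unitmx &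
     forall i (j : 'I_n), (j < k.+1)%N -> (P *m A) i j = (i == j)%:R].
Proof.
move=> uA HA; set kk := Ordinal Hk.
have [T [XT uT HT1 HT2]] : exists T, [/\ Xg T, T \in unitmx,
    (forall i (j : 'I_n), (j < k)%N -> (T *m A) i j = (i == j)%:R) &
    (T *m A) kk kk = 1].
  case: (F2P (A kk kk)) => Hkk; last first.
    by exists 1%:M; rewrite mul1mx; split => //; [apply: Xg_one|apply: unitmx1].
  have [r [Hr Ar]] := pivot_exists Hk uA HA.
  have Hrk : kk != r by apply/eqP => E; move: Ar; rewrite -E Hkk.
  exists (1%:M + delta_mx kk r); split; [exact: Xg_T|exact: CNOT_unit| |].
    move=> i j Hj; rewrite mulmxDl mul1mx mxE delta_mul_entry HA //.
    have -> : (r == j) = false.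
      by apply: negbTE; rewrite neq_ltn (leq_trans Hj Hr) orbT.
    by rewrite mulr0 addr0 HA.
  by rewrite mulmxDl mul1mx mxE delta_mul_entry Hkk Ar eqxx mul1r add0r.
set C1 := T *m A.
pose L := 1%:M + \sum_(i | i != kk) C1 i kk *: delta_mx i kk.
have [XL uL] : Xg L /\ L \in unitmx by apply: rowadd_tg.
exists (L *m T); split; [exact: Xg_mul|by rewrite unitmx_mul uL uT|].
move=> i j Hj; rewrite -mulmxA -/C1 rowadd_entry.
rewrite ltnS leq_eqVlt in Hj; case/orP: Hj => [/eqP Ejk|Hj].
  have -> : j = kk by apply: val_inj.
  rewrite HT2 mulr1; case: (eqVneq i kk) => [->|Hi] /=; first by rewrite addr0.
  by rewrite F2_xx.
rewrite HT1 //; have -> : C1 kk j = 0.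
  rewrite /C1 HT1 //; have -> : (kk == j) = false.
    by apply: negbTE; rewrite neq_ltn Hj orbT.
  by [].
by rewrite mulr0 if_same addr0.
Qed.

Lemma elim_all k : (k <= n)%N -> forall A, A \in unitmx ->
  exists P, [/\ Xg P, P \in unitmx &
     forall i (j : 'I_n), (j < k)%N -> (P *m A) i j = (i == j)%:R].
Proof.
elim: k => [_ A uA|k IH Hk A uA].
  by exists 1%:M; split => //; [apply: Xg_one|apply: unitmx1].
have [P [XP uP HP]] := IH (ltnW Hk) A uA.
have uPA : P *m A \in unitmx by rewrite unitmx_mul uP uA.
have [P' [XP' uP' HP']] := elim_step Hk uPA HP.
exists (P' *m P); split; [exact: Xg_mul|by rewrite unitmx_mul uP' uP|].
by move=> i j Hj; rewrite -mulmxA HP'.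
Qed.

Lemma GL_X A : A \in unitmx -> Xg A.
Proof.
move=> uA; have [P [XP uP HP]] := elim_all (leqnn n) uA.
have PA : P *m A = 1%:M by apply/matrixP => i j; rewrite HP // mxE.
have -> : A = invmx P by rewrite -[A]mul1mx -(mulVmx uP) -mulmxA PA mulmx1.
exact: Xg_inv.
Qed.

End Elim.

Lemma card_F2 : #|'F_2| = 2%N.
Proof. by rewrite card_Fp. Qed.

Lemma card_bits n : #|{: bits n}| = (2 ^ n)%N.
Proof. by rewrite card_mx card_F2 muln1. Qed.

Lemma bin2_arith n : (n * n.+1 = n + n + 'C(n, 2) + 'C(n, 2))%N.
Proof.
elim: n => [//|n IH]; rewrite binS bin1; nia.
Qed.

Section CardB.
Variable n : nat.

Definition T2 := {p : 'I_n * 'I_n | (p.1 < p.2)%N}.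

Lemma card_T2 : #|{: T2}| = 'C(n, 2).
Proof.
rewrite card_sig -sum1_card.
rewrite (eq_bigl (fun p : 'I_n * 'I_n => true && (p.1 < p.2)%N)) //.
rewrite -(pair_big_dep xpredT (fun (i j : 'I_n) => (i < j)%N) (fun _ _ => 1%N)) /=.
have Hin : forall i : 'I_n, (\sum_(j < n | (i < j)%N) 1 = n - i.+1)%N.
  move=> i; rewrite -(big_mkord (fun j => (i < j)%N) (fun _ => 1%N)).
  rewrite (big_cat_nat (leq0n i.+1) (ltn_ord i)) /= big1_seq ?add0n; last first.
    by move=> j /andP [Hj]; rewrite mem_index_iota => /andP [_]; rewrite ltnS leqNgt Hj.
  rewrite big_nat_cond (eq_bigl (fun j => (i.+1 <= j < n)%N)); last first.
    by move=> j /=; case: (ltnP i j) => H /=; rewrite ?andbT.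
  rewrite -(muln1 (n - i.+1)%N) -sum_nat_const_nat big_nat_cond [RHS]big_nat_cond.
  by apply: eq_bigl => j; case: (i < j < n)%N.
rewrite (eq_bigr _ (fun i _ => Hin i)).
rewrite (reindex_inj rev_ord_inj) /=.
rewrite (eq_bigr (fun i : 'I_n => nat_of_ord i)); last first.
  by move=> i _; rewrite subnSK // subKn // ltnW.
by rewrite -(big_mkord xpredT (fun i => i)) bin2_sum.
Qed.

Definition mkB (f : {ffun T2 -> 'F_2}) : 'M['F_2]_n :=
  \matrix_(i, j) (if @insub _ _ T2 (i, j) is Some p then f p
                  else if @insub _ _ T2 (j, i) is Some p then f p else 0).

Lemma mkB_lt f (i j : 'I_n) (H : (i < j)%N) :
  mkB f i j = f (Sub (i, j) H) /\ mkB f j i = f (Sub (i, j) H).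
Proof.
rewrite !mxE (@insubT _ _ T2 (i, j) H); split => //.
by rewrite insubF //= ltnNge ltnW.
Qed.

Lemma mkB_eq f (i : 'I_n) : mkB f i i = 0.
Proof. by rewrite mxE !insubF //= ltnn. Qed.

Definition Bsetb (B : 'M['F_2]_n) : bool := (B^T == B) && [forall i, B i i == 0].

Lemma BsetbP B : reflect (Bset B) (Bsetb B).
Proof.
apply: (iffP andP) => [[/eqP Bt /forallP Bd]|[Bt Bd]]; first by split => // i; apply/eqP.
by split; [apply/eqP|apply/forallP => i; apply/eqP].
Qed.

Lemma mkB_inj : injective mkB.
Proof.
move=> f g E; apply/ffunP => p; case: p => [[i j] H].
have := congr1 (fun M : 'M['F_2]_n => M i j) E.
by rewrite (proj1 (mkB_lt f H)) (proj1 (mkB_lt g H)).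
Qed.

Lemma BS_image : [set B | Bsetb B] = mkB @: setT.
Proof.
apply/setP => B; rewrite inE; apply/idP/imsetP.
  move/BsetbP => [Bt Bd]; exists [ffun p : T2 => B (val p).1 (val p).2] => //.
  apply/matrixP => i j; case: (ltngtP i j) => H.
  - by rewrite (proj1 (mkB_lt _ H)) ffunE.
  - by rewrite (proj2 (mkB_lt _ H)) ffunE /= -{1}Bt mxE.
  - have -> : j = i by apply: val_inj.
    by rewrite mkB_eq Bd.
move=> [f _ ->]; apply/BsetbP; split => [|i]; last exact: mkB_eq.
apply/matrixP => i j; rewrite mxE; case: (ltngtP i j) => H.
- by rewrite (proj1 (mkB_lt _ H)) (proj2 (mkB_lt _ H)).
- by rewrite (proj1 (mkB_lt _ H)) (proj2 (mkB_lt _ H)).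
- have -> : j = i by apply: val_inj.
  by [].
Qed.

Lemma card_BS : #|[set B | Bsetb B]| = (2 ^ 'C(n, 2))%N.
Proof.
by rewrite BS_image card_imset; [rewrite cardsT card_ffun card_F2 card_T2|exact: mkB_inj].
Qed.

Lemma card_GLs : #|[set A : 'M['F_2]_n | A \in unitmx]| =
  (2 ^ 'C(n, 2) * \prod_(1 <= i < n.+1) (2 ^ i - 1))%N.
Proof.
case: n => [|m].
  rewrite big_geq // muln1 (_ : [set A : 'M['F_2]_0 | A \in unitmx] = setT).
    by rewrite cardsT card_mx.
  apply/setP => A; rewrite !inE; have -> : A = 1%:M by rewrite !flatmx0.
  exact: unitmx1.
have := card_GL 'F_2 (ltn0Sn m); rewrite card_F2 => <-.
rewrite cardsT /= card_sub; apply: eq_card => A; by rewrite !inE.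
Qed.

End CardB.

Section Main.
Variable n : nat.
Implicit Types (x y v b : bits n) (A B M : 'M['F_2]_n) (c d : bits n -> algC).

Definition SA A (U : op_t n) : Prop :=
  exists c M, [/\ M^T = M, isQ c M & U = monop (mulmx A) c].

Lemma SA_mul A A' (U V : op_t n) : SA A U -> SA A' V -> SA (A *m A') (U *m V).
Proof.
move=> [c [M [Mt Qc ->]]] [c' [M' [Mt' Qc' ->]]].
exists (fun x => c (A' *m x) * c' x), (A'^T *m M *m A' + M'); split.
- by rewrite trmxDF Mt' !trmx_mul trmxK Mt mulmxA.
- exact: Q_mul (Q_lin A' Qc) Qc'.
- exact: monop_mulA.
Qed.

Lemma SA_inv A (U : op_t n) : A \in unitmx -> SA A U -> SA (invmx A) (invmx U).
Proof.
move=> uA [c [M [Mt Qc ->]]].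
exists (fun x => (c (invmx A *m x))^-1), ((invmx A)^T *m M *m invmx A); split.
- by rewrite !trmx_mul trmxK Mt mulmxA.
- exact: Q_inv (Q_lin (invmx A) Qc).
- exact: monop_inv (Q_neq0 Qc).
Qed.

Lemma SA_N (U : op_t n) : SA 1%:M U -> Ngrp U.
Proof.
move=> [c [M [Mt Qc ->]]]; apply: Nset_N; exists c, M; split => //.
by apply: eq_monop => x //=; rewrite mul1mx.
Qed.

Lemma N_SA (U : op_t n) : Ngrp U -> SA 1%:M U.
Proof.
move/N_Nset => [c [M [Mt Qc ->]]]; exists c, M; split => //.
by apply: eq_monop => x //=; rewrite mul1mx.
Qed.

Lemma S_SA (U : op_t n) : Sset U -> exists A, A \in unitmx /\ SA A U.
Proof. by move=> [A [c [M [uA Mt Qc ->]]]]; exists A; split => //; exists c, M. Qed.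

Definition decomp v b B A : op_t n := Zgate v *m Pgate b *m ZBgate B *m Xgate A.

Lemma decompE v b B A : decomp v b B A = monop (mulmx A) (fun x => phi v b B (A *m x)).
Proof.
rewrite /decomp ZgateE PgateE ZBgateE !monop_idmul /Xgate monop_mul.
by apply: eq_monop => x //=; rewrite mulr1.
Qed.

Lemma G_repr (U : op_t n) : Ggrp U -> exists v b B A, [/\ Bset B, A \in unitmx & U = decomp v b B A].
Proof.
move/G_S => [A [c [M [uA Mt Qc ->]]]].
have Qc' := Q_lin (invmx A) Qc.
have Mt' : ((invmx A)^T *m M *m invmx A)^T = (invmx A)^T *m M *m invmx A.
  by rewrite !trmx_mul trmxK Mt mulmxA.
have [v [b [B [HB Ec]]]] := Q_repr Mt' Qc'.
exists v, b, B, A; split => //; rewrite decompE; apply: eq_monop => x //=.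
by rewrite -Ec mulKmx.
Qed.

Lemma decomp_unique v b B A v' b' B' A' : Bset B -> Bset B' -> A \in unitmx ->
  decomp v b B A = decomp v' b' B' A' -> [/\ v' = v, b' = b, B' = B & A' = A].
Proof.
move=> HB HB' uA; rewrite !decompE => /monop_eq H.
have nz : forall x, phi v b B (A *m x) != 0 by move=> x; apply: Q_neq0 (Q_phi v b HB) _.
have {}H := H nz.
have EA : A' = A.
  apply/matrixP => i j; have := congr1 (fun w : bits n => w i ord0) (proj1 (H (ev j))).
  by rewrite /ev -!colE !mxE.
subst A'.
have Ephi : forall y, phi v b B y = phi v' b' B' y.
  by move=> y; have := proj2 (H (invmx A *m y)); rewrite mulKVmx.
by have [-> -> ->] := phi_unique HB HB' Ephi.
Qed.

Lemma N_G (U : op_t n) : Ngrp U -> Ggrp U.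
Proof.
elim=> {U} [|U HU|U V _ HU _ HV|U _ HU]; [exact: gen_one| |exact: gen_mul|exact: gen_inv].
by apply: gen_base; case: HU => [H|H]; [left|right; left].
Qed.

Lemma X_G (U : op_t n) : Xgrp U -> Ggrp U.
Proof.
elim=> {U} [|U HU|U V _ HU _ HV|U _ HU]; [exact: gen_one| |exact: gen_mul|exact: gen_inv].
by apply: gen_base; right; right.
Qed.

Lemma decomp_N v b B : Bset B -> Ngrp (Zgate v *m Pgate b *m ZBgate B).
Proof. by move=> HB; apply: gen_mul; [apply: gen_mul; [apply: Z_N|apply: P_N]|apply: ZB_N]. Qed.

Lemma decomp_G v b B A : Bset B -> A \in unitmx -> Ggrp (decomp v b B A).
Proof.
move=> HB uA; apply: gen_mul; first exact: N_G (decomp_N v b HB).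
exact: X_G (GL_X uA).
Qed.

Lemma semidirect_main : semidirect (@Ggrp n) (@Ngrp n) (@Xgrp n).
Proof.
split.
- exact: N_G.
- exact: X_G.
- move=> g U /G_S /S_SA [A [uA Hg]] /N_SA HU.
  have := SA_mul (SA_mul (SA_inv uA Hg) HU) Hg.
  by rewrite mulmx1 mulVmx // => /SA_N.
- move=> U /N_Nset [c [M [Mt Qc ->]]] /X_Xset [A [uA E]].
  have H := monop_eq (Q_neq0 Qc) E.
  by rewrite -monop1; apply: eq_monop => x //=; rewrite (proj2 (H x)).
- move=> g /G_repr [v [b [B [A [HB uA ->]]]]].
  exists (Zgate v *m Pgate b *m ZBgate B), (Xgate A); split => //.
    exact: decomp_N.
  exact: GL_X.
Qed.

End Main.

Theorem theorem3p2 (n : nat) :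
  [/\ (forall U : op_t n, Ggrp U ->
        exists (v b : bits n) (B A : 'M['F_2]_n),
          [/\ Bset B, A \in unitmx,
              U = Zgate v *m Pgate b *m ZBgate B *m Xgate A
            & forall (v' b' : bits n) (B' A' : 'M['F_2]_n), Bset B' -> A' \in unitmx ->
                U = Zgate v' *m Pgate b' *m ZBgate B' *m Xgate A' ->
                [/\ v' = v, b' = b, B' = B & A' = A]]),
      semidirect (@Ggrp n) (@Ngrp n) (@Xgrp n)
    & exists s : seq (op_t n),
        [/\ uniq s,
            size s = (2 ^ (n * n.+1) * \prod_(1 <= i < n.+1) (2 ^ i - 1))%N
          & forall U : op_t n, Ggrp U <-> U \in s]].
Proof.
split.
- move=> U /G_repr [v [b [B [A [HB uA EU]]]]].
  exists v, b, B, A; split => // v' b' B' A' HB' uA' EU'.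
  by apply: decomp_unique HB HB' uA _; rewrite -EU.
- exact: semidirect_main.
pose D := setX (setX [set: bits n] [set: bits n])
               (setX [set B : 'M['F_2]_n | Bsetb B] [set A : 'M['F_2]_n | A \in unitmx]).
pose F (t : (bits n * bits n) * ('M['F_2]_n * 'M['F_2]_n)) :=
  decomp t.1.1 t.1.2 t.2.1 t.2.2.
exists [seq F t | t <- enum D]; split.
- rewrite map_inj_in_uniq ?enum_uniq //.
  move=> [[v b] [B A]] [[v' b'] [B' A']]; rewrite !mem_enum !inE /=.
  move=> /andP [/BsetbP HB uA] /andP [/BsetbP HB' uA'] E.
  rewrite /F /= in E; by have [-> -> -> ->] := decomp_unique HB HB' uA E.
- rewrite size_map -cardE !cardsX !cardsT !card_bits card_BS card_GLs.
  rewrite bin2_arith !expnD; ring.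
- move=> U; split.
    move=> /G_repr [v [b [B [A [HB uA ->]]]]]; apply/mapP.
    exists ((v, b), (B, A)) => //; rewrite mem_enum !inE /=.
    by rewrite uA andbT; apply/BsetbP.
  move=> /mapP [[[v b] [B A]]]; rewrite mem_enum !inE /= => /andP [/BsetbP HB uA] ->.
  exact: decomp_G.
Qed.
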